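(* Let $F \in S$ be a homogeneous form of degree $d$, let $\alpha \in T_1$ be a linear form, and let $I \subseteq F^\perp$ be a saturated homogeneous ideal of $T$ defining a zero-dimensional subscheme $\mathbb{P}V(I)\subset \mathbb{P}^{n-1}$ (not necessarily reduced). Suppose $\mathbb{P}V(I)$ has no point of support on the hyperplane $\mathbb{P}V(\alpha)$ (equivalently, $I = I:\alpha$). Then $\deg I \geq \mathrm{al}(F) - \mathrm{al}(\alpha \circ F)$.
   Context: $S=\mathbb{C}[x_1,\dots,x_n]$ and $T=\mathbb{C}[\alpha_1,\dots,\alpha_n]$, where $T$ acts on $S$ by letting $\alpha_i$ act as $\partial/\partial x_i$ (the apolarity action, denoted $\Theta\circ F$). $T_1$ denotes the linear forms of $T$. For $F\in S$, $F^\perp=\{\Theta\in T : \Theta\circ F=0\}$ is the apolar ideal. $\mathrm{Diff}(F)=\{\Theta\circ F:\Theta\in T\}\subset S$ (all partial derivatives of all orders, including $F$ itself), and the apolar length is $\mathrm{al}(F)=\dim_{\mathbb{C}}\mathrm{Diff}(F)=\dim_{\mathbb{C}} T/F^\perp$. $\mathbb{P}V(I)$ is the projective subscheme of $\mathbb{P}S_1=\mathbb{P}^{n-1}$ defined by $I$, and $\deg I$ is its length. *)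

(* Defs.v *)
From HB Require Import structures.
From mathcomp Require Import all_boot all_order all_algebra.
From mathcomp Require Import mpoly.
Set Implicit Arguments. Unset Strict Implicit. Unset Printing Implicit Defensive.
Import Order.TTheory GRing.Theory.
Local Open Scope ring_scope.

Section Apolarity.
Variables (K : fieldType) (n : nat).
Notation P := {mpoly K[n]}.

(* Apolarity action Theta o F: alpha_i acts as d/dx_i, i.e. the monomial
   alpha^m acts as the iterated partial derivative mderivm m. *)
Definition apolar (Theta F : P) : P :=
  \sum_(m <- msupp Theta) Theta@_m *: mderivm m F.

Definition perp (F : P) : P -> Prop := fun Theta => apolar Theta F = 0.

Definition Diff (F : P) : P -> Prop := fun G => exists Theta, G = apolar Theta F.

Definition homog_piece (t : nat) : P -> Prop := fun p => p \is t.-homog.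

Definition hcomp (t : nat) (p : P) : P :=
  \sum_(m <- msupp p | mdeg m == t) p@_m *: 'X_[m].

Definition free_mod (W : P -> Prop) (s : seq P) : Prop :=
  forall c : 'I_(size s) -> K,
    W (\sum_(i < size s) c i *: s`_i) -> forall i, c i = 0.

(* dim_mod V W k : the K-vector space V/(V cap W) has dimension k, i.e.
   k is the maximal size of a family of elements of V linearly independent
   modulo W.  With W = {0} this is dim V. *)
Definition dim_mod (V W : P -> Prop) (k : nat) : Prop :=
  (exists s : seq P, size s = k /\ (forall x, x \in s -> V x) /\ free_mod W s)
  /\ (forall s : seq P, (forall x, x \in s -> V x) -> free_mod W s -> (size s <= k)%N).

Definition zero_sp : P -> Prop := fun p => p = 0.

Definition apolar_length (F : P) (k : nat) : Prop := dim_mod (Diff F) zero_sp k.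

Definition is_ideal (I : P -> Prop) : Prop :=
  [/\ I 0, (forall p q, I p -> I q -> I (p + q)) & (forall p q, I p -> I (q * p))].

Definition is_homogeneous_ideal (I : P -> Prop) : Prop :=
  is_ideal I /\ forall p t, I p -> I (hcomp t p).

(* saturated w.r.t. the irrelevant ideal m = (alpha_1,...,alpha_n):
   I : m^oo = I; m^k is generated by the monomials of degree k *)
Definition is_saturated (I : P -> Prop) : Prop :=
  forall p, (exists k, forall m : 'X_{1..n}, mdeg m = k -> I ('X_[m] * p)) -> I p.

Definition hilbert_fn (I : P -> Prop) (t k : nat) : Prop :=
  dim_mod (homog_piece t) I k.

(* P V(I) is zero-dimensional of length (degree) D: the Hilbert polynomial of
   T/I is the constant D, i.e. the Hilbert function is eventually equal to D *)
Definition zero_dim_of_degree (I : P -> Prop) (D : nat) : Prop :=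
  exists t0, forall t, (t0 <= t)%N -> hilbert_fn I t D.

End Apolarity.

(* Main.v *)
Require Import Defs.
From HB Require Import structures.
From mathcomp Require Import all_boot all_order all_algebra.
From mathcomp Require Import mpoly.
From mathcomp.multinomials Require Import ssrcomplements.
From mathcomp Require Import zify.
Import GRing.Theory.
Local Open Scope ring_scope.

Module Aux.
Set Implicit Arguments. Unset Strict Implicit. Unset Printing Implicit Defensive.
Section Basics.
Variables (K : fieldType) (n : nat).
Local Notation P := {mpoly K[n]}.

Lemma apolarwE k (T G : P) : (msize T <= k)%N ->
  apolar T G = \sum_(m : 'X_{1..n < k}) T@_m *: mderivm m G.
Proof.
move=> lt_pk; pose Q (m : 'X_{1..n < k}) := (val m) \in msupp T.
rewrite (bigID Q) /= addrC big1 ?add0r; last first.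
  by move=> m' /memN_msupp_eq0 ->; rewrite scale0r.
rewrite /apolar (big_mksub 'X_{1..n < k}) //=; first exact/msupp_uniq.
by move=> m' /msize_mdeg_lt /leq_trans; apply.
Qed.

Lemma apolarD (T1 T2 G : P) : apolar (T1 + T2) G = apolar T1 G + apolar T2 G.
Proof.
pose k := maxn (msize (T1 + T2)) (maxn (msize T1) (msize T2)).
rewrite !(@apolarwE k) ?/k ?leq_max ?leqnn ?orbT //.
rewrite -big_split /=; apply: eq_bigr => m _.
by rewrite mcoeffD scalerDl.
Qed.

Lemma apolarZ c (T G : P) : apolar (c *: T) G = c *: apolar T G.
Proof.
pose k := maxn (msize (c *: T)) (msize T).
rewrite !(@apolarwE k) ?/k ?leq_max ?leqnn ?orbT // scaler_sumr.
by apply: eq_bigr => m _; rewrite mcoeffZ scalerA.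
Qed.

Lemma apolar0 (G : P) : apolar 0 G = 0.
Proof. by rewrite /apolar msupp0 big_nil. Qed.

Lemma apolar_sum (I : Type) (r : seq I) (Q : pred I) (f : I -> P) G :
  apolar (\sum_(i <- r | Q i) f i) G = \sum_(i <- r | Q i) apolar (f i) G.
Proof.
by apply: (big_morph (fun T => apolar T G)); [exact: (fun a b => apolarD a b G) | exact: apolar0].
Qed.

Lemma apolarX m (G : P) : apolar 'X_[m] G = mderivm m G.
Proof. by rewrite /apolar msuppX big_seq1 mcoeffX eqxx scale1r. Qed.

Lemma apolarGD (T G1 G2 : P) : apolar T (G1 + G2) = apolar T G1 + apolar T G2.
Proof. by rewrite /apolar -big_split /=; apply: eq_bigr => m _; rewrite mderivmD scalerDr. Qed.

Lemma apolarGZ c (T G : P) : apolar T (c *: G) = c *: apolar T G.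
Proof.
rewrite /apolar scaler_sumr; apply: eq_bigr => m _.
by rewrite mderivmZ !scalerA mulrC.
Qed.

Lemma apolarG0 (T : P) : apolar T 0 = 0.
Proof. by rewrite /apolar big1 // => m _; rewrite raddf0 scaler0. Qed.

Lemma apolarG_sum (I : Type) (r : seq I) (Q : pred I) (f : I -> P) T :
  apolar T (\sum_(i <- r | Q i) f i) = \sum_(i <- r | Q i) apolar T (f i).
Proof.
by apply: (big_morph (fun G => apolar T G)); [exact: (fun a b => apolarGD T a b) | exact: apolarG0].
Qed.

Lemma apolar_linX (s : seq 'X_{1..n}) (c : 'X_{1..n} -> K) (G : P) :
  apolar (\sum_(a <- s) c a *: 'X_[a]) G = \sum_(a <- s) c a *: mderivm a G.
Proof. by rewrite apolar_sum; apply: eq_bigr => a _; rewrite apolarZ apolarX. Qed.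

Lemma apolarXM m (S G : P) : apolar ('X_[m] * S) G = mderivm m (apolar S G).
Proof.
rewrite {1}[S]mpolyE mulr_sumr.
rewrite (eq_bigr (fun b => S@_b *: 'X_[m + b])); last first.
  by move=> b _; rewrite -scalerAr mpolyXD.
rewrite apolar_sum {2}/apolar raddf_sum /=; apply: eq_bigr => b _.
by rewrite apolarZ apolarX mderivmZ -mderivmDm addmC.
Qed.

Lemma apolarM (T S G : P) : apolar (T * S) G = apolar T (apolar S G).
Proof.
transitivity (\sum_(a <- msupp T) T@_a *: mderivm a (apolar S G)); last by [].
rewrite {1}[T]mpolyE mulr_suml apolar_sum; apply: eq_bigr => a _.
by rewrite -scalerAl apolarZ apolarXM.
Qed.

Lemma apolar1 (G : P) : apolar 1 G = G.
Proof. by rewrite -mpolyX0 apolarX mderivm0m. Qed.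


Lemma mcoeff_hcomp t (p : P) k :
  (hcomp t p)@_k = if mdeg k == t then p@_k else 0.
Proof.
rewrite /hcomp raddf_sum /= big_mkcond /=.
rewrite (eq_bigr (fun m => if mdeg k == t then p@_m * (m == k)%:R else 0)); last first.
  move=> m _; rewrite mcoeffZ mcoeffX.
  case: (eqVneq m k) => [->//|ne].
  by rewrite mulr0; do 2 case: ifP.
case: ifP => _; last by rewrite big1.
rewrite {3}[p]mpolyE raddf_sum /=; apply: eq_bigr => m _.
by rewrite mcoeffZ mcoeffX.
Qed.

Lemma hcompD t (p q : P) : hcomp t (p + q) = hcomp t p + hcomp t q.
Proof. by apply/mpolyP => k; rewrite mcoeffD !mcoeff_hcomp mcoeffD; case: ifP; rewrite ?addr0. Qed.

Lemma hcompZ t c (p : P) : hcomp t (c *: p) = c *: hcomp t p.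
Proof. by apply/mpolyP => k; rewrite mcoeffZ !mcoeff_hcomp mcoeffZ; case: ifP; rewrite ?mulr0. Qed.

Lemma hcomp0 t : hcomp t (0 : P) = 0.
Proof. by apply/mpolyP => k; rewrite mcoeff_hcomp mcoeff0; case: ifP. Qed.

Lemma hcomp_sum (I : Type) (r : seq I) (Q : pred I) (f : I -> P) t :
  hcomp t (\sum_(i <- r | Q i) f i) = \sum_(i <- r | Q i) hcomp t (f i).
Proof.
by apply: (big_morph (hcomp t)); [exact: hcompD | exact: hcomp0].
Qed.

Lemma hcomp_homog t (p : P) : hcomp t p \is t.-homog.
Proof.
apply/dhomogP => m hm; have : (hcomp t p)@_m != 0 by rewrite mcoeff_eq0 hm.
by rewrite mcoeff_hcomp; case: (mdeg m =P t) => // _; rewrite eqxx.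
Qed.

Lemma homog_coeff t (p : P) : (forall m, mdeg m != t -> p@_m = 0) -> p \is t.-homog.
Proof.
move=> h; apply/dhomogP => m hm; have nz : p@_m != 0 by rewrite mcoeff_eq0 hm.
by apply/eqP; apply: contraNT nz => /h ->.
Qed.

Lemma mderivm_hcomp m t (p : P) : mderivm m (hcomp t p) =
  if (mdeg m <= t)%N then hcomp (t - mdeg m) (mderivm m p) else 0.
Proof.
apply/mpolyP => k; rewrite mcoeff_mderivm mcoeff_hcomp mdegD.
case: leqP => hm.
  rewrite mcoeff_hcomp mcoeff_mderivm.
  have -> : (mdeg m + mdeg k == t)%N = (mdeg k == t - mdeg m)%N.
    by apply/eqP/eqP; lia.
  by case: ifP; rewrite ?mul0rn.
rewrite mcoeff0; have -> : (mdeg m + mdeg k == t)%N = false by apply/eqP; lia.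
by rewrite mul0rn.
Qed.

Lemma hcomp_deriv_homog d t a (F : P) : F \is d.-homog ->
  hcomp t (mderivm a F) = (mdeg a + t == d)%N%:R *: mderivm a F.
Proof.
move=> hF; apply/mpolyP => k; rewrite mcoeff_hcomp mcoeffZ mcoeff_mderivm.
have F0 : (mdeg a + mdeg k != d)%N -> F@_(a + k) = 0.
  by move=> h; apply: (dhomog_nemf_coeff hF); rewrite -mdegD in h.
case: (eqVneq (mdeg k) t) => [<-|ne].
  by case: (eqVneq (mdeg a + mdeg k)%N d) => [_|/F0 ->]; rewrite ?mul1r ?mul0rn ?mulr0.
case: (eqVneq (mdeg a + t)%N d) => [e|_]; last by rewrite mul0r.
by rewrite F0 ?mul0rn ?mulr0 //; apply/eqP; lia.
Qed.


Lemma apolar_hcomp_ker (alpha p : P) e : alpha \is 1.-homog ->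
  apolar alpha p = 0 -> apolar alpha (hcomp e p) = 0.
Proof.
move=> ha hp; rewrite /apolar.
case: (boolP (1 <= e)%N) => h1.
  transitivity (\sum_(a <- msupp alpha) hcomp (e - 1) (alpha@_a *: mderivm a p)).
    apply: eq_big_seq => a /(dhomog_mf ha) /= da.
    by rewrite mderivm_hcomp da h1 hcompZ.
  by rewrite -hcomp_sum -/(apolar alpha p) hp hcomp0.
rewrite big_seq big1 // => a /(dhomog_mf ha) /= da.
by rewrite mderivm_hcomp da (negbTE h1) scaler0.
Qed.

Definition pair (T G : P) := (apolar T G)@_0%MM.
Definition mfact (m : 'X_{1..n}) := (\prod_(i < n) (m i)^_(m i))%N.

Lemma pair_X m (G : P) : pair 'X_[m] G = G@_m * (mfact m)%:R.
Proof. by rewrite /pair apolarX mcoeff_mderivm addm0 mulr_natr. Qed.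

Lemma pairD (T1 T2 G : P) : pair (T1 + T2) G = pair T1 G + pair T2 G.
Proof. by rewrite /pair apolarD mcoeffD. Qed.

Lemma pair_sum (I : Type) (r : seq I) (Q : pred I) (c : I -> K) (f : I -> P) G :
  pair (\sum_(i <- r | Q i) c i *: f i) G = \sum_(i <- r | Q i) c i * pair (f i) G.
Proof.
rewrite /pair apolar_sum raddf_sum /=; apply: eq_bigr => i _.
by rewrite apolarZ mcoeffZ.
Qed.

Lemma pairG0 (T : P) : pair T 0 = 0.
Proof. by rewrite /pair apolarG0 mcoeff0. Qed.

Lemma pairM (alpha R G : P) : pair (alpha * R) G = pair R (apolar alpha G).
Proof. by rewrite /pair mulrC apolarM. Qed.

Lemma mfact_neq0 m : [pchar K] =i pred0 -> (mfact m)%:R != 0 :> K.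
Proof.
move=> /pcharf0P ->; rewrite -lt0n /mfact prodn_gt0 // => i.
by rewrite ffactnn fact_gt0.
Qed.

Section DiffSec.
Variables (F : P) (d : nat).
Hypothesis hF : F \is d.-homog.

Lemma Diff0 : Diff F 0.
Proof. by exists 0; rewrite apolar0. Qed.

Lemma DiffD p q : Diff F p -> Diff F q -> Diff F (p + q).
Proof. by move=> [T ->] [S ->]; exists (T + S); rewrite apolarD. Qed.

Lemma DiffZ c p : Diff F p -> Diff F (c *: p).
Proof. by move=> [T ->]; exists (c *: T); rewrite apolarZ. Qed.

Lemma Diff_sum (I : Type) (r : seq I) (Q : pred I) (f : I -> P) :
  (forall i, Q i -> Diff F (f i)) -> Diff F (\sum_(i <- r | Q i) f i).
Proof. by move=> h; apply: big_ind => //; [exact: Diff0 | exact: DiffD]. Qed.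

Lemma Diff_apolar T G : Diff F G -> Diff F (apolar T G).
Proof. by move=> [S ->]; exists (T * S); rewrite apolarM. Qed.

Lemma Diff_alpha alpha G : Diff F G -> Diff (apolar alpha F) (apolar alpha G).
Proof. by move=> [S ->]; exists S; rewrite -!apolarM mulrC. Qed.

Lemma Diff_hcomp t G : Diff F G -> Diff F (hcomp t G).
Proof.
move=> [T ->]; exists (\sum_(a <- msupp T) (T@_a * (mdeg a + t == d)%N%:R) *: 'X_[a]).
rewrite apolar_linX /apolar hcomp_sum; apply: eq_bigr => a _.
by rewrite hcompZ (hcomp_deriv_homog _ _ hF) scalerA.
Qed.

Lemma Diff_bnd G m : Diff F G -> (d < mdeg m)%N -> G@_m = 0.
Proof.
move=> [T ->] hm; rewrite /apolar raddf_sum /= big1 // => a _.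
rewrite mcoeffZ mcoeff_mderivm (dhomog_nemf_coeff hF) ?mul0rn ?mulr0 //.
by apply/eqP => h; move: (mdegD a m) => /=; rewrite h; lia.
Qed.

End DiffSec.

End Basics.

Section Bridge.
Variables (K : fieldType) (n B : nat).
Local Notation P := {mpoly K[n]}.
Definition cc := #|{: 'X_{1..n < B}}|.
Local Notation c := cc.
Definition mon (k : 'I_c) : 'X_{1..n} := val (enum_val k : 'X_{1..n < B}).
Lemma mon_inj : injective mon.
Proof. move=> i j /val_inj /enum_val_inj. done. Qed.
Lemma mon_deg k : (mdeg (mon k) < B)%N.
Proof. exact: bmdeg. Qed.
Lemma mon_surj m : (mdeg m < B)%N -> exists k, mon k = m.
Proof. move=> h. exists (enum_rank (BMultinom h)). by rewrite /mon enum_rankK. Qed.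

Definition vec (p : P) : 'rV[K]_c := \row_k p@_(mon k).
Definition pol (v : 'rV[K]_c) : P := \sum_k v 0 k *: 'X_[mon k].

Lemma mcoeff_pol v m : (pol v)@_m = \sum_k v 0 k * (mon k == m)%:R.
Proof. by rewrite /pol raddf_sum /=; apply: eq_bigr => k _; rewrite mcoeffZ mcoeffX. Qed.

Lemma pol_coeff_mon v k : (pol v)@_(mon k) = v 0 k.
Proof.
rewrite mcoeff_pol (bigD1 k) //= eqxx mulr1 big1 ?addr0 // => j ne.
by rewrite (inj_eq mon_inj) (negbTE ne) mulr0.
Qed.

Lemma vec_pol v : vec (pol v) = v.
Proof. by apply/rowP => k; rewrite mxE pol_coeff_mon. Qed.

Lemma pol_vec (p : P) : (forall m, (B <= mdeg m)%N -> p@_m = 0) -> pol (vec p) = p.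
Proof.
move=> hb; apply/mpolyP => m; case: (ltnP (mdeg m) B) => h.
  by have [k <-] := mon_surj h; rewrite pol_coeff_mon mxE.
rewrite hb // mcoeff_pol big1 // => k _; rewrite mxE.
have : mon k != m by apply/eqP => e; move: (mon_deg k); rewrite e; lia.
by move/negbTE ->; rewrite mulr0.
Qed.

Lemma pol0 : pol 0 = 0.
Proof. by rewrite /pol big1 // => k _; rewrite mxE scale0r. Qed.

Lemma pol_mul r (y : 'rV_r) (M : 'M_(r, c)) :
  pol (y *m M) = \sum_i y 0 i *: pol (row i M).
Proof.
apply/mpolyP => m; rewrite mcoeff_pol raddf_sum /=.
rewrite (eq_bigr (fun i => y 0 i * \sum_k M i k * (mon k == m)%:R)); last first.
  by move=> i _; rewrite mcoeffZ mcoeff_pol; congr (_ * _); apply: eq_bigr => k _; rewrite mxE.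
rewrite (eq_bigr (fun k => \sum_i y 0 i * M i k * (mon k == m)%:R)); last first.
  by move=> k _; rewrite mxE mulr_suml.
rewrite exchange_big /=; apply: eq_bigr => i _; rewrite mulr_sumr.
by apply: eq_bigr => k _; rewrite mulrA.
Qed.

Lemma vec_sum r (cf : 'I_r -> K) (f : 'I_r -> P) :
  vec (\sum_i cf i *: f i) = \sum_i cf i *: vec (f i).
Proof.
apply/rowP => k; rewrite mxE raddf_sum summxE /=; apply: eq_bigr => i _.
by rewrite mcoeffZ !mxE.
Qed.

Definition Pm (e : nat) : 'M[K]_c :=
  \matrix_(i, j) ((i == j) && (mdeg (mon j) == e))%:R.

Lemma mulPm (x : 'rV_c) e : x *m Pm e = \row_j (if mdeg (mon j) == e then x 0 j else 0).
Proof.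
apply/rowP => j; rewrite !mxE (bigD1 j) //= big1 ?addr0; last first.
  by move=> i ne; rewrite mxE (negbTE ne) mulr0.
by rewrite mxE eqxx /=; case: ifP; rewrite ?mulr1 ?mulr0.
Qed.

Lemma sum_Pm : \sum_(e < B) Pm e = 1%:M.
Proof.
apply/matrixP => i j; rewrite summxE !mxE.
case: (eqVneq i j) => [->|ne] /=; last by rewrite big1 // => e _; rewrite mxE (negbTE ne).
rewrite (bigD1 (Ordinal (mon_deg j))) //= mxE !eqxx /= big1 ?addr0 // => e ne.
rewrite mxE eqxx /=; case: eqP => // h; case/eqP: ne; exact: val_inj.
Qed.

Lemma pol_Pm x e : pol (x *m Pm e) = hcomp e (pol x).
Proof.
apply/mpolyP => m; rewrite mcoeff_hcomp !mcoeff_pol.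
rewrite (eq_bigr (fun k => if mdeg m == e then x 0 k * (mon k == m)%:R else 0)); last first.
  move=> k _; rewrite mulPm mxE.
  have F0 : (false%:R : K) = 0 by [].
  case: (eqVneq (mon k) m) => [->|_]; first by case: ifP; rewrite ?mul0r.
  by rewrite F0 !mulr0; case: ifP.
by case: (mdeg m == e) => //; rewrite big1.
Qed.

Definition Aal (alpha : P) : 'M[K]_c := \matrix_(j, k) (apolar alpha 'X_[mon j])@_(mon k).

Lemma vec_apolar alpha (p : P) : (forall m, (B <= mdeg m)%N -> p@_m = 0) ->
  vec p *m Aal alpha = vec (apolar alpha p).
Proof.
move=> hb; apply/rowP => k; rewrite -{2}(pol_vec hb) /pol apolarG_sum !mxE raddf_sum /=.
by apply: eq_bigr => j _; rewrite apolarGZ mcoeffZ !mxE.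
Qed.

Definition mx_of (s : seq P) : 'M[K]_(size s, c) := \matrix_(i, k) (s`_i)@_(mon k).

Lemma row_mx_of s i : row i (mx_of s) = vec s`_i.
Proof. by apply/rowP => k; rewrite !mxE. Qed.

Lemma mul_mx_of s (y : 'rV_(size s)) : y *m mx_of s = vec (\sum_i y 0 i *: s`_i).
Proof. by rewrite vec_sum mulmx_sum_row; apply: eq_bigr => i _; rewrite row_mx_of. Qed.

End Bridge.

Section Lin.
Variables (K : fieldType) (n : nat).
Local Notation P := {mpoly K[n]}.

Definition lin (cf : nat -> K) (s : seq P) := \sum_(i < size s) cf i *: s`_i.
Definition freeN (W : P -> Prop) (s : seq P) :=
  forall cf, W (lin cf s) -> forall i, (i < size s)%N -> cf i = 0.

Lemma lin_cat cf s1 s2 :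
  lin cf (s1 ++ s2) = lin cf s1 + lin (fun i => cf (size s1 + i)%N) s2.
Proof.
rewrite /lin size_cat big_split_ord /=; congr (_ + _); apply: eq_bigr => i _.
  by rewrite nth_cat ltn_ord.
by rewrite nth_cat /= ltnNge leq_addr /= addKn.
Qed.

Lemma lin_map_mul cf s (q : P) : lin cf (map (fun p => q * p) s) = q * lin cf s.
Proof.
rewrite /lin size_map mulr_sumr; apply: eq_bigr => i _.
by rewrite (nth_map 0) // scalerAr.
Qed.

Lemma lin_map_ord cf r (f : 'I_r -> P) :
  lin cf (map f (enum 'I_r)) = \sum_(j < r) cf j *: f j.
Proof.
rewrite /lin size_map size_enum_ord; apply: eq_bigr => j _.
by rewrite (nth_map j) ?size_enum_ord // nth_ord_enum.
Qed.

Lemma freeN_free W s : freeN W s -> free_mod W s.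
Proof.
move=> h cc hw i.
pose c' := fun k => oapp cc 0 (insub k : option 'I_(size s)).
have e : lin c' s = \sum_(i < size s) cc i *: s`_i.
  by apply: eq_bigr => j _; rewrite /c' valK.
have := h c'; rewrite e => /(_ hw i (ltn_ord i)).
by rewrite /c' valK.
Qed.

Lemma free_freeN W s : free_mod W s -> freeN W s.
Proof. by move=> h cf hw i hi; exact: (h (fun j => cf j) hw (Ordinal hi)). Qed.

End Lin.

Section Main.
Variables (K : fieldType) (n d : nat) (F alpha : {mpoly K[n]}) (I : {mpoly K[n]} -> Prop).
Local Notation P := {mpoly K[n]}.
Hypothesis hch : [pchar K] =i pred0.
Hypothesis hF : F \is d.-homog.
Hypothesis ha : alpha \is 1.-homog.
Hypothesis hI : is_ideal I.
Hypothesis hperp : forall T, I T -> perp F T.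
Hypothesis hcol : forall p, I (alpha * p) -> I p.
Local Notation B := d.+1.
Local Notation c := (cc n B).
Local Notation vec := (@vec K n B).
Local Notation pol := (@pol K n B).
Local Notation mon := (@mon n B).
Local Notation Pm := (@Pm K n B).

Lemma I_kill T G : I T -> Diff F G -> apolar T G = 0.
Proof.
move=> hT [S ->]; rewrite -apolarM; apply: hperp.
by case: hI => _ _ hm; rewrite mulrC; apply: hm.
Qed.

Lemma col_pow k p : I (alpha ^+ k * p) -> I p.
Proof.
elim: k p => [|k IH] p; first by rewrite expr0 mul1r.
by rewrite exprS -mulrA => /hcol /IH.
Qed.

Lemma bndD G : Diff F G -> forall m, (B <= mdeg m)%N -> G@_m = 0.
Proof. by move=> hG m hm; apply: (Diff_bnd hF hG). Qed.

Lemma rank_split (V : 'M[K]_c) E :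
  (\rank (V *m \sum_(e < E) Pm e) <= \sum_(e < E) \rank (V *m Pm e))%N.
Proof.
elim: E => [|E IH]; first by rewrite !big_ord0 mulmx0 mxrank0.
rewrite !big_ord_recr /= mulmxDr.
apply: leq_trans (mxrankS (addmx_sub_adds (submx_refl _) (submx_refl _))) _.
apply: leq_trans (mxrank_adds_leqif _ _).1 _.
by rewrite leq_add2r.
Qed.

Section Fam.
Variable V : 'M[K]_c.
Hypothesis HV : forall x : 'rV_c, (x <= V)%MS ->
  Diff F (pol x) /\ apolar alpha (pol x) = 0.

Lemma good_PE E (x : 'rV_c) : (x <= V *m Pm E)%MS ->
  [/\ Diff F (pol x), apolar alpha (pol x) = 0 &
      forall k, mdeg (mon k) != E -> x 0 k = 0].
Proof.
case/submxP => y ->; rewrite mulmxA.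
have [hD hA] := HV (submxMl y V).
rewrite pol_Pm; split; first exact: (Diff_hcomp hF).
  exact: apolar_hcomp_ker.
by move=> k hk; rewrite mulPm mxE (negbTE hk).
Qed.

Lemma famT E : (E <= B)%N -> exists fam : seq P,
  [/\ size fam = (\sum_(e < E) \rank (V *m Pm e))%N,
      (forall p, p \in fam -> p \is E.-1.-homog) & freeN I fam].
Proof.
elim: E => [|E IH] hE.
  exists [::]; split => //; first by rewrite big_ord0.
have [fam [hs hh hf]] := IH (ltnW hE).
set G := row_base (V *m Pm E).
set r := \rank (V *m Pm E).
have hGsub : (G <= V *m Pm E)%MS by rewrite eq_row_base.
have /row_freeP [X hX] : row_free G by exact: row_base_free.
clearbody G.
have hg : forall i : 'I_r, [/\ Diff F (pol (row i G)), apolar alpha (pol (row i G)) = 0 &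
    forall k, mdeg (mon k) != E -> G i k = 0].
  move=> i; have := @good_PE E (row i G).
  case; first by rewrite (submx_trans (row_sub i G)).
  by move=> h1 h2 h3; split => // k /h3; rewrite mxE.
pose Phi (j : 'I_r) := pol ((\row_k (X k j / (mfact (mon k))%:R)) *m Pm E).
have pairPhi : forall i j, pair (Phi j) (pol (row i G)) = (i == j)%:R.
  move=> i j; rewrite /Phi {1}/pol pair_sum.
  transitivity ((G *m X) i j); first rewrite mxE; last by rewrite hX mxE.
  apply: eq_bigr => k _; rewrite pair_X pol_coeff_mon mulPm !mxE.
  case: (eqVneq (mdeg (mon k)) E) => hk.
    by rewrite [_ * (mfact _)%:R]mulrC mulrA divfK ?mfact_neq0 // mulrC.
  by case: (hg i) => _ _ /(_ k hk) ->; rewrite !mul0r.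
exists (map (fun p => alpha * p) fam ++ map Phi (enum 'I_r)); split.
- by rewrite size_cat size_map size_map size_enum_ord hs big_ord_recr.
- move=> p; rewrite mem_cat => /orP [/mapP [q hq ->] | /mapP [j _ ->]].
    have hE0 : (0 < E)%N.
      rewrite lt0n; apply/eqP => E0; move: hs; rewrite E0 big_ord0 => /size0nil hnil.
      by rewrite hnil in hq.
    by have := dhomogM ha (hh q hq); rewrite add1n prednK.
  by rewrite /Phi pol_Pm hcomp_homog.
- move=> cf hI' i hi.
  rewrite lin_cat lin_map_mul lin_map_ord size_map in hI'.
  have hb : forall j : 'I_r, cf (size fam + j)%N = 0.
    move=> j; case: (hg j) => hD hA _.
    have h0 := I_kill hI' hD.
    have : pair (alpha * lin cf fam + \sum_(j0 < r) cf (size fam + j0)%N *: Phi j0) (pol (row j G)) = 0.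
      by rewrite /pair h0 mcoeff0.
    rewrite pairD pairM hA pairG0 add0r pair_sum.
    rewrite (bigD1 j) //= pairPhi eqxx mulr1 big1 ?addr0 // => k ne.
    by rewrite pairPhi eq_sym (negbTE ne) mulr0.
  have hsum0 : \sum_(j0 < r) cf (size fam + j0)%N *: Phi j0 = 0.
    by rewrite big1 // => j _; rewrite hb scale0r.
  rewrite hsum0 addr0 in hI'.
  have hL := hcol hI'.
  rewrite size_cat size_map size_map size_enum_ord in hi.
  case: (ltnP i (size fam)) => hi'; first exact: hf hL i hi'.
  have hj : (i - size fam < r)%N by rewrite ltn_subLR.
  by have := hb (Ordinal hj); rewrite /= subnKC.
Qed.

End Fam.

Lemma freeN_rows r (M : 'M[K]_(r, c)) (f : 'I_r -> P) : row_free M ->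
  (forall i, vec (f i) = row i M) -> freeN (@zero_sp K n) (map f (enum 'I_r)).
Proof.
move=> hM hv cf h i hi; rewrite lin_map_ord /zero_sp in h.
rewrite size_map size_enum_ord in hi.
have : (\row_(j < r) cf j) *m M = 0.
  rewrite mulmx_sum_row (eq_bigr (fun j : 'I_r => cf j *: vec (f j))); last first.
    by move=> j _; rewrite hv mxE.
  by rewrite -vec_sum h; apply/rowP => k; rewrite !mxE mcoeff0.
move/eqP; rewrite mulmx_free_eq0 // => /eqP /rowP /(_ (Ordinal hi)).
by rewrite !mxE.
Qed.

Lemma main_ineq (alF alaF degI : nat) :
  zero_dim_of_degree I degI ->
  apolar_length F alF ->
  apolar_length (apolar alpha F) alaF ->
  (alF <= degI + alaF)%N.
Proof.
move=> [t0 ht0] [[s0 [hsz [hin hfree]]] _] [_ hmaxD].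
pose N := maxn t0 d.
have [_ hmaxI] := ht0 N (leq_maxl _ _).
have bnd_s0 : forall i, forall m, (B <= mdeg m)%N -> (s0`_i)@_m = 0.
  move=> i; case: (ltnP i (size s0)) => hi; first by apply: bndD; apply: hin; rewrite mem_nth.
  by move=> m _; rewrite nth_default // mcoeff0.
pose A := mx_of B s0.
have rfA : row_free A.
  apply: inj_row_free => y hy.
  pose S := \sum_i y 0 i *: s0`_i.
  have hS : Diff F S.
    apply: Diff_sum => i _; apply: DiffZ; apply: hin; exact: mem_nth.
  have S0 : S = 0.
    by rewrite -(pol_vec (bndD hS)) -mul_mx_of -/A hy pol0.
  apply/rowP => i; rewrite mxE; exact: (hfree (fun i => y 0 i) S0 i).
have rkA : \rank A = alF by rewrite -hsz; apply/eqP.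
have rn := mxrank_mul_ker A (Aal B alpha).
have himg : (\rank (A *m Aal B alpha) <= alaF)%N.
  pose M := rowsub (maxrankfun (A *m Aal B alpha)) (A *m Aal B alpha).
  pose f := fun j => apolar alpha (s0`_(maxrankfun (A *m Aal B alpha) j)).
  have hfr : freeN (@zero_sp K n) (map f (enum 'I_(\rank (A *m Aal B alpha)))).
    apply: (@freeN_rows _ M); first exact: maxrowsub_free.
    by move=> j; rewrite /M row_rowsub row_mul /A row_mx_of vec_apolar //; apply: bnd_s0.
  have := hmaxD _ _ (freeN_free hfr).
  rewrite size_map size_enum_ord; apply => x /mapP [j _ ->].
  apply: Diff_alpha; apply: hin; exact: mem_nth.
pose V := (A :&: kermx (Aal B alpha))%MS.
have HV : forall x : 'rV_c, (x <= V)%MS -> Diff F (pol x) /\ apolar alpha (pol x) = 0.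
  move=> x hx.
  have /submxP [y ey] : (x <= A)%MS by apply: submx_trans hx (capmxSl _ _).
  have hD : Diff F (pol x).
    rewrite ey pol_mul; apply: Diff_sum => i _; apply: DiffZ.
    rewrite row_mx_of pol_vec; [exact: (hin _ (mem_nth 0 (ltn_ord i))) | exact: bnd_s0].
  split => //.
  have /sub_kermxP hk : (x <= kermx (Aal B alpha))%MS by apply: submx_trans hx (capmxSr _ _).
  have hD2 : Diff F (apolar alpha (pol x)) by exact: Diff_apolar.
  rewrite -(pol_vec (bndD hD2)) -vec_apolar ?vec_pol ?hk ?pol0 //; exact: bndD.
have hV : (\rank V <= \sum_(e < B) \rank (V *m Pm e))%N.
  by rewrite -{1}(mulmx1 V) -sum_Pm; exact: rank_split.
have [fam [hs hh hf]] := famT HV (leqnn B).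
pose famN := map (fun p => alpha ^+ (N - d) * p) fam.
have hN : (size famN <= degI)%N.
  apply: hmaxI.
    move=> x /mapP [p hp ->]; rewrite /homog_piece.
    have := dhomogM (dhomogMn (N - d) ha) (hh p hp).
    by rewrite mul1n /= subnK // leq_maxr.
  apply: freeN_free => cf hcf i hi; rewrite size_map in hi.
  apply: (hf cf _ i hi); rewrite /famN lin_map_mul in hcf.
  exact: col_pow hcf.
rewrite size_map hs in hN.
have hk2 : (\rank (A :&: kermx (Aal B alpha)) <= degI)%N by exact: leq_trans hV hN.
lia.
Qed.

End Main.

End Aux.

Theorem mainTheorem3 (K : closedFieldType) (charK0 : [pchar K] =i pred0)
  (n d : nat) (F : {mpoly K[n]}) (alpha : {mpoly K[n]})
  (I : {mpoly K[n]} -> Prop) (degI alF alaF : nat) :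
  F \is d.-homog ->
  alpha \is 1.-homog ->
  is_homogeneous_ideal I ->
  is_saturated I ->
  (forall Theta, I Theta -> perp F Theta) ->
  zero_dim_of_degree I degI ->
  (forall p, I (alpha * p) -> I p) ->
  apolar_length F alF ->
  apolar_length (apolar alpha F) alaF ->
  (alF <= degI + alaF)%N.
Proof.
move=> hF ha [hI _] _ hperp hz hcol hal hala.
exact: (Aux.main_ineq charK0 hF ha hI hperp hcol hz hal hala).
Qed.
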